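(* For every even integer $n\ge 4$ there exist a boolean classifier $\kappa:\{0,1\}^n\to\{0,1\}$ and a point $\mathbf v\in\{0,1\}^n$ such that, for the sample $(\mathbf v,\kappa(\mathbf v))$, there exist an irrelevant feature $i_1\in\mathcal F$ with $\mathrm{Sv}(i_1)\neq 0$ and a relevant feature $i_2\in\mathcal F\setminus\{i_1\}$ with $\mathrm{Sv}(i_2)=0$ (issue I4).
   Context: Let $\mathcal F=\{1,\dots,n\}$. A boolean classifier is a non-constant function $\kappa:\{0,1\}^n\to\{0,1\}$; a sample is a pair $(\mathbf v,c)$ with $\mathbf v\in\{0,1\}^n$ and $c=\kappa(\mathbf v)$. For $\mathcal S\subseteq\mathcal F$ let $\Upsilon(\mathcal S;\mathbf v)=\{\mathbf x\in\{0,1\}^n : x_j=v_j \text{ for all } j\in\mathcal S\}$ and, for any function $g$ on $\{0,1\}^n$, $\mathbf E[g\mid \mathbf x_{\mathcal S}=\mathbf v_{\mathcal S}]=|\Upsilon(\mathcal S;\mathbf v)|^{-1}\sum_{\mathbf x\in\Upsilon(\mathcal S;\mathbf v)}g(\mathbf x)$ (uniform distribution, independent features). The characteristic function is $\upsilon(\mathcal S)=\mathbf E[\kappa\mid\mathbf x_{\mathcal S}=\mathbf v_{\mathcal S}]$, and the SHAP score of feature $i$ is $\mathrm{Sv}(i)=\sum_{\mathcal S\subseteq\mathcal F\setminus\{i\}}\frac{|\mathcal S|!\,(n-|\mathcal S|-1)!}{n!}\big(\upsilon(\mathcal S\cup\{i\})-\upsilon(\mathcal S)\big)$. The similarity predicate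 is $\sigma(\mathbf x)=1$ if $\kappa(\mathbf x)=\kappa(\mathbf v)$ and $0$ otherwise. A set $\mathcal S\subseteq\mathcal F$ is a weak abductive explanation (WAXp) if $\mathbf E[\sigma\mid\mathbf x_{\mathcal S}=\mathbf v_{\mathcal S}]=1$ (i.e. $\kappa(\mathbf x)=\kappa(\mathbf v)$ for all $\mathbf x\in\Upsilon(\mathcal S;\mathbf v)$); an abductive explanation (AXp) is a WAXp $\mathcal S$ such that $\mathcal S\setminus\{t\}$ is not a WAXp for every $t\in\mathcal S$. A feature is relevant if it belongs to at least one AXp, and irrelevant otherwise. *)

(* Defs.v *)
From mathcomp Require Import all_boot all_order all_algebra.
Set Implicit Arguments. Unset Strict Implicit. Unset Printing Implicit Defensive.
Import Order.TTheory GRing.Theory Num.Theory.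
Local Open Scope ring_scope.

(* Features F = {1..n} are represented by 'I_n; points of {0,1}^n by finite functions. *)
Definition point (n : nat) := {ffun 'I_n -> bool}.

Definition nonconstant (n : nat) (kappa : point n -> bool) : Prop :=
  exists x y : point n, kappa x <> kappa y.

Definition Ups (n : nat) (S : {set 'I_n}) (v : point n) : {set point n} :=
  [set x : point n | [forall j in S, x j == v j]].

Definition cexp (n : nat) (g : point n -> rat) (S : {set 'I_n}) (v : point n) : rat :=
  (#|Ups S v|%:R)^-1 * \sum_(x in Ups S v) g x.

Definition charf (n : nat) (kappa : point n -> bool) (v : point n)
  (S : {set 'I_n}) : rat := cexp (fun x => (kappa x)%:R) S v.

Definition Sv (n : nat) (kappa : point n -> bool) (v : point n) (i : 'I_n) : rat :=
  \sum_(S : {set 'I_n} | i \notin S)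
     ((#|S| `! * (n - #|S| - 1) `!)%:R / (n `!)%:R) *
     (charf kappa v (i |: S) - charf kappa v S).

Definition sigma (n : nat) (kappa : point n -> bool) (v : point n) (x : point n) : rat :=
  if kappa x == kappa v then 1 else 0.

Definition WAXp (n : nat) (kappa : point n -> bool) (v : point n) (S : {set 'I_n}) : Prop :=
  cexp (sigma kappa v) S v = 1.

Definition AXp (n : nat) (kappa : point n -> bool) (v : point n) (S : {set 'I_n}) : Prop :=
  WAXp kappa v S /\ forall t, t \in S -> ~ WAXp kappa v (S :\ t).

Definition relevant (n : nat) (kappa : point n -> bool) (v : point n) (i : 'I_n) : Prop :=
  exists S : {set 'I_n}, AXp kappa v S /\ i \in S.

Definition irrelevant (n : nat) (kappa : point n -> bool) (v : point n) (i : 'I_n) : Prop :=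
  ~ relevant kappa v i.

(* Main.v *)
Require Import Defs.
From mathcomp Require Import all_boot all_order all_algebra.
From mathcomp Require Import ring lra.
Set Implicit Arguments. Unset Strict Implicit. Unset Printing Implicit Defensive.
Import Order.TTheory GRing.Theory Num.Theory.
Local Open Scope ring_scope.

Section Gen.
Variable n : nat.

Definition flip (i : 'I_n) (x : point n) : point n :=
  [ffun t => if t == i then ~~ x t else x t].

Lemma flipE i x t : flip i x t = if t == i then ~~ x t else x t.
Proof. by rewrite ffunE. Qed.

Lemma flipK i : involutive (flip i).
Proof. move=> x; apply/ffunP=> t; rewrite !flipE; case: (t == i) => //; exact: negbK. Qed.

Lemma UpsP (S : {set 'I_n}) (v x : point n) :
  reflect (forall t, t \in S -> x t = v t) (x \in Ups S v).
Proof.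
rewrite inE; apply: (iffP forallP) => H t.
- by move=> tS; apply/eqP; move: (H t); rewrite tS.
- by apply/implyP => /H ->.
Qed.

Lemma v_in_Ups (S : {set 'I_n}) (v : point n) : v \in Ups S v.
Proof. by apply/UpsP. Qed.

Lemma card_Ups_neq0 (S : {set 'I_n}) (v : point n) : (#|Ups S v|%:R : rat) != 0.
Proof.
rewrite pnatr_eq0 -lt0n; apply/card_gt0P; exists v; exact: v_in_Ups.
Qed.

Lemma sum_split (g : point n -> rat) (S : {set 'I_n}) (v : point n) i : i \notin S ->
  \sum_(x in Ups S v) g x = \sum_(x in Ups (i |: S) v) (g x + g (flip i x)).
Proof.
move=> iS; rewrite big_split /= (bigID (fun x : point n => x i == v i)) /=.
congr (_ + _).
  apply: eq_bigl => x; apply/andP/UpsP.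
  - move=> [/UpsP H /eqP E] t; rewrite in_setU1 => /orP [/eqP -> //| /H //].
  - move=> H; split; last by apply/eqP/H; rewrite setU11.
    by apply/UpsP => t tS; apply/H; rewrite in_setU1 tS orbT.
rewrite (reindex_inj (can_inj (flipK i))) /=.
apply: eq_bigl => x; rewrite flipE eqxx; apply/andP/UpsP.
- move=> [/UpsP H E] t; rewrite in_setU1 => /orP [/eqP -> | tS].
    by move: E; case: (x i); case: (v i).
  have tni : (t == i) = false by apply/eqP => ti; rewrite -ti tS in iS.
  by have := H t tS; rewrite flipE tni.
- move=> H; split.
    apply/UpsP => t tS.
    have tni : (t == i) = false by apply/eqP => ti; rewrite -ti tS in iS.
    by rewrite flipE tni; apply: H; rewrite in_setU1 tS orbT.
  by rewrite H ?setU11 //; case: (v i).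
Qed.

Lemma card_split (S : {set 'I_n}) (v : point n) i : i \notin S ->
  (#|Ups S v|%:R : rat) = 2 * #|Ups (i |: S) v|%:R.
Proof.
move=> iS; have := sum_split (fun _ => (1 : rat)) v iS.
rewrite !sumr_const => ->; rewrite -mulr_natr; ring.
Qed.

Lemma delta_flip (kappa : point n -> bool) (v : point n) (S : {set 'I_n}) i : i \notin S ->
  charf kappa v (i |: S) - charf kappa v S =
  (#|Ups (i |: S) v|%:R)^-1 *
   (\sum_(x in Ups (i |: S) v) ((kappa x)%:R - (kappa (flip i x))%:R)) / 2.
Proof.
move=> iS; rewrite /charf /cexp (card_split v iS)
  (sum_split (fun x => (kappa x)%:R) v iS) big_split /= sumrB.
have := card_Ups_neq0 (i |: S) v.
set c := (#|_|%:R : rat) => c0.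
by field; rewrite c0.
Qed.

Lemma avg_out (S : {set 'I_n}) (v : point n) t : t \notin S ->
  (#|Ups S v|%:R)^-1 * \sum_(x in Ups S v) ((x t)%:R : rat) = 1/2.
Proof.
move=> tS; rewrite (card_split v tS) (sum_split (fun x => ((x t)%:R : rat)) v tS).
have -> : \sum_(x in Ups (t |: S) v) (((x t)%:R : rat) + (flip t x t)%:R) =
          \sum_(x in Ups (t |: S) v) 1.
  by apply: eq_bigr => x _; rewrite flipE eqxx; case: (x t).
rewrite sumr_const.
have := card_Ups_neq0 (t |: S) v.
set c := (#|_|%:R : rat) => c0.
by field; rewrite c0.
Qed.

Lemma avg_in (S : {set 'I_n}) (v : point n) t : t \in S -> v t = true ->
  (#|Ups S v|%:R)^-1 * \sum_(x in Ups S v) ((x t)%:R : rat) = 1.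
Proof.
move=> tS vt.
have -> : \sum_(x in Ups S v) ((x t)%:R : rat) = \sum_(x in Ups S v) 1.
  by apply: eq_bigr => x /UpsP H; rewrite H // vt.
by rewrite sumr_const mulVf // card_Ups_neq0.
Qed.

Lemma WAXpE (kappa : point n -> bool) (v : point n) (S : {set 'I_n}) :
  WAXp kappa v S <-> (forall x, x \in Ups S v -> kappa x = kappa v).
Proof.
rewrite /WAXp /cexp.
have c0 := card_Ups_neq0 S v.
split.
- move=> H.
  have Hs : \sum_(y in Ups S v) (sigma kappa v y) = #|Ups S v|%:R.
    by apply: (mulfI (invr_neq0 c0)); rewrite H mulVf.
  have H0 : \sum_(y in Ups S v) (1 - sigma kappa v y) = 0.
    by rewrite sumrB Hs sumr_const subrr.
  move=> x xU.
  have Hnn : forall y, y \in Ups S v -> 0 <= 1 - sigma kappa v y.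
    by move=> y _; rewrite /sigma; case: ifP => _; rewrite ?subrr ?subr0.
  have := psumr_eq0P Hnn H0 xU.
  by rewrite /sigma; case: eqP => // _ /eqP; rewrite subr0 oner_eq0.
- move=> H.
  have -> : \sum_(y in Ups S v) (sigma kappa v y) = \sum_(y in Ups S v) 1.
    by apply: eq_bigr => y yU; rewrite /sigma H // eqxx.
  by rewrite sumr_const mulVf.
Qed.

Lemma weight_gt0 (S : {set 'I_n}) :
  0 < ((#|S| `! * (n - #|S| - 1) `!)%:R / (n `!)%:R : rat).
Proof. by apply: divr_gt0; rewrite ltr0n ?muln_gt0 !fact_gt0. Qed.

End Gen.
Section Spec.
Variable m : nat.
Local Notation N := m.+4.
Definition i1 : 'I_N := @Ordinal N 0 isT.
Definition i2 : 'I_N := @Ordinal N 1 isT.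
Definition jj : 'I_N := @Ordinal N 2 isT.
Definition kk : 'I_N := @Ordinal N 3 isT.
Definition kap (x : point N) : bool :=
  (if x i2 then x jj else x kk) || (x i1 && (x jj == x kk)).
Definition vv : point N := [ffun _ => true].

Lemma kap_vv : kap vv = true.
Proof. by rewrite /kap !ffunE. Qed.

Lemma kapW (S : {set 'I_N}) :
  WAXp kap vv S <-> (jj \in S) && ((i2 \in S) || (kk \in S)).
Proof.
rewrite WAXpE kap_vv; split.
- move=> H.
  have jS : jj \in S.
    apply/negPn/negP => jS.
    pose x : point N := [ffun t => t != jj].
    have xU : x \in Ups S vv.
      apply/UpsP => t tS; rewrite !ffunE; apply/negP => /eqP tj.
      by move: jS; rewrite -tj tS.
    by have := H x xU; rewrite /kap !ffunE.
  rewrite jS /=; apply/negPn/negP; rewrite negb_or => /andP [a b].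
  pose x : point N := [ffun t => (t != i2) && (t != kk)].
  have xU : x \in Ups S vv.
    apply/UpsP => t tS; rewrite !ffunE; apply/andP; split; apply/negP => /eqP tj.
      by move: a; rewrite -tj tS.
    by move: b; rewrite -tj tS.
  by have := H x xU; rewrite /kap !ffunE.
- case/andP => jS /orP [iS|kS] x /UpsP xU; rewrite /kap.
    by rewrite xU // xU // !ffunE.
  by rewrite (xU jj) // (xU kk) // !ffunE; case: (x i2).
Qed.


Lemma rel_i2 : relevant kap vv i2.
Proof.
exists [set i2; jj]; split; last by rewrite !inE eqxx.
split; first by apply/kapW; rewrite !inE.
by move=> t; rewrite !inE => /orP [] /eqP -> /kapW; rewrite !inE.
Qed.

Lemma irr_i1 : irrelevant kap vv i1.
Proof.
move=> [S [[/kapW W H] iS]].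
apply: (H i1 iS); apply/kapW.
by rewrite !in_setD1; case/andP: W => -> /orP [] ->; rewrite ?orbT.
Qed.

Lemma delta_i1_ge0 (S : {set 'I_N}) : i1 \notin S ->
  0 <= charf kap vv (i1 |: S) - charf kap vv S.
Proof.
move=> iS; rewrite delta_flip //.
apply: mulr_ge0; last by rewrite invr_ge0 ler0n.
apply: mulr_ge0; first by rewrite invr_ge0 ler0n.
apply: sumr_ge0 => x /UpsP xU.
have xi : x i1 = true by rewrite xU ?setU11 // ffunE.
rewrite /kap !flipE /= xi.
by case: (x i2); case: (x jj); case: (x kk); rewrite /= ?subrr ?subr0.
Qed.

Lemma delta_i1_set0 : 0 < charf kap vv (i1 |: set0) - charf kap vv set0.
Proof.
rewrite delta_flip ?inE //.
apply: mulr_gt0; last by rewrite invr_gt0 ltr0n.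
apply: mulr_gt0; first by rewrite invr_gt0 ltr0n; apply/card_gt0P; exists vv; exact: v_in_Ups.
pose x0 : point N := [ffun t => t == i1].
have x0U : x0 \in Ups (i1 |: set0) vv.
  by apply/UpsP => t; rewrite !inE orbF => /eqP ->; rewrite !ffunE.
rewrite (bigD1 x0) //=.
apply: ltr_pwDl.
  by rewrite /kap !flipE !ffunE.
apply: sumr_ge0 => x /andP [/UpsP xU _].
have xi : x i1 = true by rewrite xU ?setU11 // ffunE.
rewrite /kap !flipE /= xi.
by case: (x i2); case: (x jj); case: (x kk); rewrite /= ?subrr ?subr0.
Qed.


Lemma Sv_i1 : 0 < Sv kap vv i1.
Proof.
rewrite /Sv (bigD1 set0) ?inE //=.
apply: ltr_pwDl; first by apply: mulr_gt0; [exact: weight_gt0 | exact: delta_i1_set0].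
apply: sumr_ge0 => S /andP [iS _]; apply: mulr_ge0.
  exact: ltW (weight_gt0 _).
exact: delta_i1_ge0.
Qed.

Definition aa (b : bool) : rat := if b then 1 else 1/2.

Lemma delta_i2 (S : {set 'I_N}) : i2 \notin S ->
  charf kap vv (i2 |: S) - charf kap vv S = (aa (jj \in S) - aa (kk \in S)) / 2.
Proof.
move=> iS; rewrite delta_flip //.
have -> : \sum_(x in Ups (i2 |: S) vv) (((kap x)%:R : rat) - (kap (flip i2 x))%:R) =
   \sum_(x in Ups (i2 |: S) vv) ((x jj)%:R - (x kk)%:R).
  apply: eq_bigr => x /UpsP xU.
  have xi : x i2 = true by rewrite xU ?setU11 // ffunE.
  rewrite /kap !flipE /= xi.
  by case: (x i1); case: (x jj); case: (x kk); rewrite /= ?subrr ?subr0.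
rewrite sumrB mulrBr.
have avg t : t != i2 -> (#|Ups (i2 |: S) vv|%:R)^-1 *
    \sum_(x in Ups (i2 |: S) vv) ((x t)%:R : rat) = aa (t \in S).
  move=> ti; rewrite /aa; case: ifP => tS.
    by apply: avg_in; rewrite ?in_setU1 ?tS ?orbT // ffunE.
  by apply: avg_out; rewrite in_setU1 negb_or ti tS.
by rewrite !avg.
Qed.

Definition sw (t : 'I_N) : 'I_N := if t == jj then kk else if t == kk then jj else t.

Lemma swK : involutive sw.
Proof.
move=> t; rewrite /sw.
have [->|tj] := eqVneq t jj; first by [].
have [->|tk] := eqVneq t kk; first by [].
by rewrite (negbTE tj) (negbTE tk).
Qed.

Lemma Sv_i2 : Sv kap vv i2 = 0.
Proof.
rewrite /Sv.
under eq_bigr => S iS do rewrite delta_i2 //.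
set T := (\sum_(S | _) _).
suff : T = - T by lra.
have swinj : injective sw := can_inj swK.
rewrite {1}/T (reindex_inj (imset_inj swinj)) /= /T -sumrN.
apply: eq_big => [S|S _].
  by rewrite -{1}[i2]/(sw i2) mem_imset.
have Ej : (jj \in [set sw x | x in S]) = (kk \in S).
  by rewrite -[jj]/(sw kk) mem_imset.
have Ek : (kk \in [set sw x | x in S]) = (jj \in S).
  by rewrite -[kk]/(sw jj) mem_imset.
rewrite card_imset // Ej Ek; ring.
Qed.

End Spec.

Theorem proposition3 (n : nat) (hn : (4 <= n)%N) (heven : ~~ odd n) :
  exists (kappa : point n -> bool) (v : point n),
    nonconstant kappa /\
    exists i1 i2 : 'I_n,
      [/\ irrelevant kappa v i1, Sv kappa v i1 != 0,
          i2 != i1, relevant kappa v i2 & Sv kappa v i2 = 0].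
Proof.
move: hn heven; case: n => [|[|[|[|m]]]] // _ _.
exists (@kap m), (@vv m); split.
  by exists (@vv m), [ffun _ => false]; rewrite kap_vv /kap !ffunE.
exists (@i1 m), (@i2 m); split.
- exact: irr_i1.
- exact: lt0r_neq0 (Sv_i1 m).
- by [].
- exact: rel_i2.
- exact: Sv_i2.
Qed.
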